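(* Let $(b_n)_{n\ge 0}$ and $(p_{2n})_{n\ge 1}$ be sequences of non-negative integers, not all $p_{2n}$ zero, and let $$V(x)=\sum_{n=0}^\infty b_n x^n,\qquad U(x)=\sum_{n=1}^\infty p_{2n}x^n$$ have radii of convergence $x_V$ and $x_U$ respectively, where $0<x_U<x_V\le 1$ and $\lim_{x\to x_V^-}V(x)=\infty$. Let $c>1$, $c\notin\mathbb N$, and assume $$U(x)=U(x_U^-)+U_0(x_U-x)^{c-1}+o\big((x_U-x)^{c-1}\big)\qquad(x\to x_U^-),$$ with $U(x_U^-)=\lim_{x\to x_U^-}U(x)<\infty$ and a constant $U_0\neq 0$. Assume $U(x_U^-)V(x_U)\le1$, and let $w_c\ge1$ be defined by $U(x_U^-)V(w_cx_U)=1$. Let $Z(x,w)=V(wx)/(1-U(x)V(wx))$. Then $Z$ has the scaling form $$Z(x,w)\sim (x_U-x)^{-\theta}\,F\!\left(\frac{w-w_c}{(x_U-x)^{\phi}}\right)\qquad (x,w)\to(x_U^-,w_c^+),$$ i.e. for each fixed $s\ge0$ with $F(s)$ finite, $(x_U-x)^{\theta}Z\big(x,\,w_c+s(x_U-x)^\phi\big)\to F(s)$ as $x\to x_U^-$, where $$\theta=\phi=c-1,\qquad F(s)=\frac{1}{|U_0|-U(x_U^-)^2\,V'(w_cx_U)\,x_U\,s}\qquad\text{if }1<c<2,$$ $$\theta=\phi=1,\qquad F(s)=\frac{1}{U(x_U^-)^2\,V'(w_cx_U)\,[w_c-x_U s]}\qquad\text{if }c>2.$$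
   Context: Poland–Scheraga model of DNA denaturation: $b_n$ counts paths of length $n$, $p_{2n}$ counts marked loops of length $2n$, $w\ge1$ is a Boltzmann factor, and $Z(x,w)$ is the generating function of chains (alternating sequences of paths and loops beginning and ending with a path), with $x$ conjugate to length. $V'$ denotes the derivative of $V$. $A\sim B$ means $A/B\to1$. *)

(* Defs.v *)
From Stdlib Require Import Reals.
From Coquelicot Require Import Coquelicot.
Open Scope R_scope.

Definition Vcoef (b : nat -> nat) : nat -> R := fun n => INR (b n).

(* Coefficients of U(x) = sum_{n>=1} p_{2n} x^n; here [p n] stands for p_{2n},
   and the value [p 0] is ignored (coefficient of x^0 is 0). *)
Definition Ucoef (p : nat -> nat) : nat -> R :=
  fun n => match n with O => 0 | S _ => INR (p n) end.

Definition Vfun (b : nat -> nat) (x : R) : R := PSeries (Vcoef b) x.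
Definition Ufun (p : nat -> nat) (x : R) : R := PSeries (Ucoef p) x.

Definition Zfun (b p : nat -> nat) (x w : R) : R :=
  Vfun b (w * x) / (1 - Ufun p x * Vfun b (w * x)).

(* Main.v *)
Require Import Defs.
From Stdlib Require Import Reals Lra.
From Coquelicot Require Import Coquelicot.
Open Scope R_scope.

Section L.
Context (xU : R).
Let T := R.
Notation F := (at_left xU).
Let FF : Filter F := @filter_filter _ _ (at_left_proper_filter xU).
Existing Instance FF.

Lemma lim_plus (f g : T -> R) (a b : R) : filterlim f F (locally a) -> filterlim g F (locally b) ->
  filterlim (fun x => f x + g x) F (locally (a + b)).
Proof. intros Hf Hg. eapply filterlim_comp_2; [exact Hf|exact Hg|]. exact (filterlim_plus a b). Qed.

Lemma lim_mult (f g : T -> R) (a b : R) : filterlim f F (locally a) -> filterlim g F (locally b) ->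
  filterlim (fun x => f x * g x) F (locally (a * b)).
Proof. intros Hf Hg. eapply filterlim_comp_2; [exact Hf|exact Hg|]. exact (filterlim_mult a b). Qed.

Lemma lim_opp (f : T -> R) (a : R) : filterlim f F (locally a) -> filterlim (fun x => - f x) F (locally (- a)).
Proof. intros Hf. eapply filterlim_comp; [exact Hf|]. exact (filterlim_opp a). Qed.

Lemma lim_inv (f : T -> R) (a : R) : a <> 0 -> filterlim f F (locally a) -> filterlim (fun x => / f x) F (locally (/ a)).
Proof. intros Ha Hf. eapply filterlim_comp; [exact Hf|].
  assert (H : Finite a <> Finite 0) by congruence.
  exact (filterlim_Rbar_inv a H). Qed.

Lemma lim_const (a : R) : filterlim (fun _ => a) F (locally a).
Proof. apply filterlim_const. Qed.

Lemma lim_ext (f g : T -> R) (l : R) : F (fun x => f x = g x) -> filterlim f F (locally l) -> filterlim g F (locally l).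
Proof. intros H Hf. exact (filterlim_ext_loc f g H Hf). Qed.

Lemma lim_eq (f : T -> R) (l l' : R) : l = l' -> filterlim f F (locally l) -> filterlim f F (locally l').
Proof. intros ->; auto. Qed.
End L.

Lemma left_pos xU : 0 < xU -> at_left xU (fun x => 0 < x < xU).
Proof. intros H. exists (mkposreal xU H). intros y Hy Hy'. simpl in *.
  change (Rabs (y - xU) < xU) in Hy. split; [|exact Hy'].
  apply Rabs_lt_between in Hy. lra. Qed.

Lemma lim_id xU : filterlim (fun x => x) (at_left xU) (locally xU).
Proof. apply (filterlim_filter_le_1 _ (filter_le_within _)). apply filterlim_id. Qed.

Lemma lim_rpow xU q : 0 < q -> filterlim (fun x => Rpower (xU - x) q) (at_left xU) (locally 0).
Proof.
  intros Hq P [eps He]. 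
  assert (Hd : 0 < Rpower eps (/ q)) by (unfold Rpower; apply exp_pos).
  exists (mkposreal _ Hd). intros y Hy Hy'. simpl in *. apply He.
  change (Rabs (Rpower (xU - y) q - 0) < eps).
  change (Rabs (y - xU) < Rpower eps (/ q)) in Hy.
  rewrite Rminus_0_r, Rabs_pos_eq by (unfold Rpower; left; apply exp_pos).
  rewrite Rabs_left in Hy by lra.
  replace (pos eps) with (Rpower (Rpower eps (/q)) q).
  apply Rlt_Rpower_l; lra.
  rewrite Rpower_mult, Rinv_l by lra. apply Rpower_1. apply cond_pos.
Qed.
Definition dq (Vf : R -> R) (a V' y : R) : R :=
  if Req_EM_T y a then V' else (Vf y - Vf a) / (y - a).

Lemma dq_cont Vf a V' : derivable_pt_lim Vf a V' ->
  filterlim (dq Vf a V') (locally a) (locally V').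
Proof.
  intros HD P [eps He]. destruct (HD eps (cond_pos eps)) as [d Hd].
  exists d. intros y Hy. apply He. unfold dq.
  destruct (Req_EM_T y a) as [->|Hne]. apply ball_center.
  change (Rabs ((Vf y - Vf a) / (y - a) - V') < eps).
  change (Rabs (y - a) < d) in Hy.
  replace y with (a + (y - a)) at 1 by ring.
  apply Hd; [lra|exact Hy].
Qed.

Lemma dq_eq Vf a V' y : Vf y = Vf a + dq Vf a V' y * (y - a).
Proof. unfold dq. destruct (Req_EM_T y a) as [->|Hne]. ring. field. lra. Qed.

Lemma eventually_ne (T : Type) (F : (T -> Prop) -> Prop) (FF : Filter F) (f : T -> R) (l : R) :
  l <> 0 -> filterlim f F (locally l) -> F (fun x => f x <> 0).
Proof.
  intros Hl Hf. assert (Hp : 0 < Rabs l) by (apply Rabs_pos_lt; exact Hl).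
  apply (Hf (fun y => y <> 0)). exists (mkposreal _ Hp). intros y Hy. change (Rabs (y - l) < Rabs l) in Hy.
  intros ->. rewrite Rminus_0_l, Rabs_Ropp in Hy. lra.
Qed.

Lemma key (Uf Vf tt : R -> R) (xU Ux a wc V' L m s : R) :
  0 < xU -> a = wc * xU -> Ux * Vf a = 1 -> derivable_pt_lim Vf a V' ->
  filterlim tt (at_left xU) (locally 0) ->
  (forall x, tt x <> 0) ->
  filterlim (fun x => (Uf x - Ux) / tt x) (at_left xU) (locally L) ->
  filterlim (fun x => (xU - x) / tt x) (at_left xU) (locally m) ->
  (- Ux * V' * (s * xU - wc * m) - L * Vf a) <> 0 ->
  filterlim (fun x => tt x * (Vf ((wc + s * tt x) * x) / (1 - Uf x * Vf ((wc + s * tt x) * x))))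
    (at_left xU) (locally (Vf a / (- Ux * V' * (s * xU - wc * m) - L * Vf a))).
Proof.
  intros HxU Ha HUV HD Ht Ht0 HP HM HDn.
  set (W := fun x => (wc + s * tt x) * x).
  set (h := fun x => W x - a).
  assert (Hid := lim_id xU).
  assert (He : filterlim (fun x => xU - x) (at_left xU) (locally 0)).
  { apply (lim_eq _ _ (xU + - xU)); [ring|]. apply lim_plus; [apply (lim_const xU)|]. apply lim_opp; exact Hid. }
  assert (Hh : filterlim h (at_left xU) (locally 0)).
  { apply (lim_ext _ (fun x => s * tt x * x + - (wc * (xU - x)))).
    apply filter_forall. intros x. unfold h, W. rewrite Ha. ring.
    apply (lim_eq _ _ (s * 0 * xU + - (wc * 0))); [ring|].
    apply lim_plus; [|apply lim_opp]; apply lim_mult; try apply lim_mult; try apply (lim_const xU); assumption. }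
  assert (HW : filterlim W (at_left xU) (locally a)).
  { apply (lim_ext _ (fun x => a + h x)). apply filter_forall. intros x. unfold h. ring.
    apply (lim_eq _ _ (a + 0)); [ring|]. apply lim_plus; [apply (lim_const xU)|exact Hh]. }
  assert (HG : filterlim (fun x => dq Vf a V' (W x)) (at_left xU) (locally V')).
  { eapply filterlim_comp; [exact HW|]. apply dq_cont; exact HD. }
  assert (HQ : filterlim (fun x => h x / tt x) (at_left xU) (locally (s * xU - wc * m))).
  { apply (lim_ext _ (fun x => s * x + - (wc * ((xU - x) / tt x)))).
    apply filter_forall. intros x. unfold h, W. rewrite Ha. field. apply Ht0.
    apply lim_plus; [|apply lim_opp]; apply lim_mult; try apply (lim_const xU); assumption. }
  assert (HVw : filterlim (fun x => Vf a + dq Vf a V' (W x) * h x) (at_left xU) (locally (Vf a))).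
  { apply (lim_eq _ _ (Vf a + V' * 0)); [ring|]. apply lim_plus; [apply (lim_const xU)|].
    apply lim_mult; assumption. }
  set (X := fun x => - Ux * dq Vf a V' (W x) * (h x / tt x) + - (((Uf x - Ux) / tt x) * (Vf a + dq Vf a V' (W x) * h x))).
  assert (HX : filterlim X (at_left xU) (locally (- Ux * V' * (s * xU - wc * m) - L * Vf a))).
  { unfold X. apply (lim_eq _ _ (- Ux * V' * (s * xU - wc * m) + - (L * Vf a))); [ring|].
    apply lim_plus; [|apply lim_opp]; apply lim_mult; try apply lim_mult; try apply (lim_const xU); assumption. }
  assert (HXn := eventually_ne _ (at_left xU) _ _ _ HDn HX).
  apply (lim_ext _ (fun x => (Vf a + dq Vf a V' (W x) * h x) * / X x)).
  { apply (filter_imp (fun x => X x <> 0)); [|exact HXn]. intros x Hx.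
    assert (E : Vf (W x) = Vf a + dq Vf a V' (W x) * h x) by (unfold h; apply dq_eq).
    fold (W x). rewrite <- E.
    assert (E2 : 1 - Uf x * Vf (W x) = tt x * X x).
    { unfold X. rewrite E. field_simplify; [|apply Ht0]. 
      replace 1 with (Ux * Vf a) by exact HUV. unfold h. ring. }
    rewrite E2. field. split; [exact Hx|apply Ht0]. }
  apply lim_mult; [exact HVw|]. apply lim_inv; assumption.
Qed.

Lemma Ucoef_nonneg p n : 0 <= Ucoef p n.
Proof. destruct n; simpl; [lra|apply pos_INR]. Qed.

Lemma U_mono p xU x y : CV_radius (Ucoef p) = Finite xU -> 0 <= x <= y -> y < xU ->
  Ufun p x <= Ufun p y.
Proof.
  intros Hr Hxy Hy. unfold Ufun, PSeries. apply Series_le.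
  - intros n. split.
    + apply Rmult_le_pos; [apply Ucoef_nonneg|apply pow_le; lra].
    + apply Rmult_le_compat_l; [apply Ucoef_nonneg|apply pow_incr; lra].
  - assert (H : ex_pseries (Ucoef p) y).
    { apply CV_radius_inside. rewrite Hr. simpl. rewrite Rabs_pos_eq; lra. }
    apply (ex_series_ext (fun k => scal (pow_n y k) (Ucoef p k))); [|exact H].
    intros n. rewrite pow_n_pow. unfold scal; simpl; unfold mult; simpl. apply Rmult_comm.
Qed.

Lemma rpow_ne e q : Rpower e q <> 0.
Proof. unfold Rpower. apply Rgt_not_eq, exp_pos. Qed.

Theorem theorem3
  (b p : nat -> nat) (xU xV c U0 Ux wc : R)
  (Hp : exists n : nat, (1 <= n)%nat /\ p n <> 0%nat)
  (HrV : CV_radius (Vcoef b) = Finite xV)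
  (HrU : CV_radius (Ucoef p) = Finite xU)
  (HxU : 0 < xU) (HxUV : xU < xV) (HxV1 : xV <= 1)
  (HVinf : filterlim (Vfun b) (at_left xV) (Rbar_locally p_infty))
  (Hc : 1 < c) (Hcn : forall n : nat, c <> INR n)
  (HUlim : filterlim (Ufun p) (at_left xU) (locally Ux))
  (HU0 : U0 <> 0)
  (HUasym : filterlim
     (fun x => (Ufun p x - Ux - U0 * Rpower (xU - x) (c - 1))
               / Rpower (xU - x) (c - 1))
     (at_left xU) (locally 0))
  (HUV : Ux * Vfun b xU <= 1)
  (Hwc1 : 1 <= wc) (HwcV : wc * xU < xV) (Hwc : Ux * Vfun b (wc * xU) = 1) :
  (c < 2 ->
    forall s : R, 0 <= s ->
    Rabs U0 - Ux ^ 2 * Derive (Vfun b) (wc * xU) * xU * s <> 0 ->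
    filterlim
      (fun x => Rpower (xU - x) (c - 1)
                * Zfun b p x (wc + s * Rpower (xU - x) (c - 1)))
      (at_left xU)
      (locally (1 / (Rabs U0 - Ux ^ 2 * Derive (Vfun b) (wc * xU) * xU * s))))
  /\
  (2 < c ->
    forall s : R, 0 <= s ->
    Ux ^ 2 * Derive (Vfun b) (wc * xU) * (wc - xU * s) <> 0 ->
    filterlim
      (fun x => Rpower (xU - x) 1 * Zfun b p x (wc + s * Rpower (xU - x) 1))
      (at_left xU)
      (locally (1 / (Ux ^ 2 * Derive (Vfun b) (wc * xU) * (wc - xU * s))))).
Proof.
  set (a := wc * xU). set (V' := Derive (Vfun b) a).
  change (Ux * Vfun b a = 1) in Hwc.
  assert (HD : derivable_pt_lim (Vfun b) a V').
  { apply is_derive_Reals. unfold V'. apply Derive_correct. unfold Vfun.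
    apply ex_derive_PSeries. rewrite HrV. simpl. unfold a. rewrite Rabs_pos_eq; nra. }
  assert (HUx : Ux <> 0). { intros ->. lra. }
  assert (HVa : Vfun b a <> 0). { intros E. rewrite E in Hwc. lra. }
  assert (HVa' : Vfun b a = / Ux).
  { apply (Rmult_eq_reg_l Ux); [|exact HUx]. rewrite Hwc. field. exact HUx. }
  assert (Hpos := left_pos xU HxU).
  split.
  - intros Hc2 s Hs Hne.
    assert (HPU : filterlim (fun x => (Ufun p x - Ux) / Rpower (xU - x) (c - 1)) (at_left xU) (locally U0)).
    { apply (lim_ext xU (fun x => (Ufun p x - Ux - U0 * Rpower (xU - x) (c - 1)) / Rpower (xU - x) (c - 1) + U0)).
      apply filter_forall. intros x. field. apply rpow_ne.
      apply (lim_eq xU _ (0 + U0)); [ring|]. apply lim_plus; [exact HUasym|apply lim_const]. }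
    assert (HU0n : U0 <= 0).
    { assert (Hle := filterlim_le (F := at_left xU) (fun x => (Ufun p x - Ux) / Rpower (xU - x) (c - 1)) (fun _ => 0) U0 0).
      simpl in Hle. apply Hle; [| exact HPU | apply lim_const].
      apply (filter_imp (fun x => 0 < x < xU)); [|exact Hpos]. intros x Hx.
      unfold Rdiv. apply Rmult_le_0_r.
      2: { left. apply Rinv_0_lt_compat. unfold Rpower. apply exp_pos. }
      assert (Hle2 := filterlim_le (F := at_left xU) (fun _ => Ufun p x) (Ufun p) (Ufun p x) Ux).
      simpl in Hle2. cut (Ufun p x <= Ux); [lra|]. apply Hle2; [|apply lim_const|exact HUlim].
      assert (Hd : 0 < xU - x) by lra.
      exists (mkposreal _ Hd). intros y Hy Hy'. simpl in *.
      change (Rabs (y - xU) < xU - x) in Hy. apply Rabs_lt_between in Hy.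
      apply (U_mono p xU); auto; lra. }
    set (D1 := - U0 - Ux ^ 2 * V' * xU * s).
    assert (HD1 : D1 <> 0). { unfold D1. rewrite Rabs_left1 in Hne by exact HU0n. exact Hne. }
    assert (Eq : - Ux * V' * (s * xU - wc * 0) - U0 * Vfun b a = D1 * Vfun b a).
    { unfold D1. rewrite HVa'. field. exact HUx. }
    apply (lim_eq xU _ (Vfun b a / (- Ux * V' * (s * xU - wc * 0) - U0 * Vfun b a))).
    { rewrite Eq, Rabs_left1 by exact HU0n. fold V'. fold a. fold D1.
      field. split; assumption. }
    unfold Zfun.
    apply (key (Ufun p) (Vfun b) (fun x => Rpower (xU - x) (c - 1)) xU Ux a wc V' U0 0 s); auto.
    + apply lim_rpow. lra.
    + intros x. apply rpow_ne.
    + apply (lim_ext xU (fun x => Rpower (xU - x) (2 - c))).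
      * apply (filter_imp (fun x => 0 < x < xU)); [|exact Hpos]. intros x Hx.
        assert (He : 0 < xU - x) by lra.
        assert (E : Rpower (xU - x) (2 - c) * Rpower (xU - x) (c - 1) = xU - x).
        { rewrite <- Rpower_plus. replace (2 - c + (c - 1)) with 1 by ring. apply Rpower_1; exact He. }
        rewrite <- E at 2. field. apply rpow_ne.
      * apply lim_rpow. lra.
    + rewrite Eq. apply Rmult_integral_contrapositive_currified; assumption.
  - intros Hc2 s Hs Hne.
    set (D2 := Ux ^ 2 * V' * (wc - xU * s)).
    assert (HD2 : D2 <> 0) by exact Hne.
    assert (Eq : - Ux * V' * (s * xU - wc * 1) - 0 * Vfun b a = D2 * Vfun b a).
    { unfold D2. rewrite HVa'. field. exact HUx. }
    apply (lim_eq xU _ (Vfun b a / (- Ux * V' * (s * xU - wc * 1) - 0 * Vfun b a))).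
    { rewrite Eq. fold V'. fold a. fold D2. field. split; assumption. }
    unfold Zfun.
    apply (key (Ufun p) (Vfun b) (fun x => Rpower (xU - x) 1) xU Ux a wc V' 0 1 s); auto.
    + apply lim_rpow. lra.
    + intros x. apply rpow_ne.
    + apply (lim_ext xU (fun x => ((Ufun p x - Ux - U0 * Rpower (xU - x) (c - 1)) / Rpower (xU - x) (c - 1) + U0) * Rpower (xU - x) (c - 2))).
      * apply filter_forall. intros x.
        replace (c - 1) with ((c - 2) + 1) by ring. rewrite Rpower_plus.
        field. split; apply rpow_ne.
      * apply (lim_eq xU _ ((0 + U0) * 0)); [ring|]. apply lim_mult; [apply lim_plus; [exact HUasym|apply lim_const]|].
        apply lim_rpow. lra.
    + apply (lim_ext xU (fun _ => 1)).
      * apply (filter_imp (fun x => 0 < x < xU)); [|exact Hpos]. intros x Hx.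
        rewrite Rpower_1 by lra. field. lra.
      * apply lim_const.
    + rewrite Eq. apply Rmult_integral_contrapositive_currified; assumption.
Qed.
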